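(* Let $n\ge 1$, $N=2^n$ and $s=(N-1)/2$. Let $0\le j<N/2$ be an integer and let $z\in\{0,1\}^N$ have Hamming distance strictly less than $N/16$ from the Hadamard codeword $W^{(N)}_j$. Let $$|\Psi_3\rangle=\hat H^{\otimes n}\,\hat U_z\,\hat H^{\otimes n}\,\tfrac{1}{\sqrt2}\left(\left|\tfrac12\right\rangle_s+\left|-\tfrac12\right\rangle_s\right).$$ Then measuring $|\Psi_3\rangle$ in the spin basis yields one of the two states $|\tfrac12+j\rangle_s$, $|-\tfrac12-j\rangle_s$ with probability at least $9/16$, i.e. $$\left|\left\langle \tfrac12+j\,\middle|\,\Psi_3\right\rangle_s\right|^2+\left|\left\langle -\tfrac12-j\,\middle|\,\Psi_3\right\rangle_s\right|^2\ \ge\ \tfrac{9}{16}.$$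
   Context: Work in $\mathbb{C}^N$ with computational basis $\{|y\rangle : y=0,\dots,N-1\}$. The spin basis states $|m\rangle_s$, $m\in\{-s,\dots,s\}$, are identified with computational basis states via $|m\rangle_s=|m+s\rangle$. For $x,y\in\{0,\dots,N-1\}$ let $x\cdot y\in\{0,1\}$ be the inner product modulo 2 of their $n$-bit binary expansions. $\hat H^{\otimes n}|y\rangle=N^{-1/2}\sum_{x=0}^{N-1}(-1)^{x\cdot y}|x\rangle$. The Hadamard codeword $W^{(N)}_j\in\{0,1\}^N$ has bit $x\cdot j$ at position $x\in\{0,\dots,N-1\}$. For $z\in\{0,1\}^N$, $\hat U_z$ is the diagonal unitary $\hat U_z|x\rangle=(-1)^{z_x}|x\rangle$. Strings at Hamming distance less than $N/16$ from $W^{(N)}_j$ are called codewords with fewer than $N/16$ unrestricted errors (the set $\Xi^{(N)}_j$). *)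

(* Defs.v *)
From HB Require Import structures.
From mathcomp Require Import all_boot all_order all_algebra all_field.
Set Implicit Arguments. Unset Strict Implicit. Unset Printing Implicit Defensive.
Import Order.TTheory GRing.Theory Num.Theory.
Local Open Scope ring_scope.

Definition bit (i x : nat) : bool := odd (x %/ 2 ^ i).

Definition bitdot (n x y : nat) : bool :=
  odd (\sum_(i < n) (bit i x && bit i y))%N.

(* Hadamard transform H^{(x) n}: <x|H^n|y> = N^{-1/2} (-1)^{x.y} *)
Definition hadn (n : nat) : 'M[algC]_(2 ^ n) :=
  \matrix_(x, y) ((sqrtC (2 ^ n)%:R)^-1 * (-1) ^+ bitdot n x y).

Definition Uz (n : nat) (z : {ffun 'I_(2 ^ n) -> bool}) : 'M[algC]_(2 ^ n) :=
  \matrix_(x, y) ((x == y)%:R * (-1) ^+ z x).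

Definition hadamard_codeword (n j : nat) : {ffun 'I_(2 ^ n) -> bool} :=
  [ffun x : 'I_(2 ^ n) => bitdot n x j].

Definition hamming_dist (n : nat) (z w : {ffun 'I_(2 ^ n) -> bool}) : nat :=
  #|[set x : 'I_(2 ^ n) | z x != w x]|.

Definition spin (n : nat) : algC := ((2 ^ n)%:R - 1) / 2.

(* spin basis state |m>_s := |m + s> (computational basis) *)
Definition spin_ket (n : nat) (m : algC) : 'cV[algC]_(2 ^ n) :=
  \col_(i < 2 ^ n) ((i%:R == m + spin n)%:R).

Definition braket (N : nat) (a b : 'cV[algC]_N) : algC :=
  \sum_(i < N) (a i 0)^* * b i 0.

Definition Psi3 (n : nat) (z : {ffun 'I_(2 ^ n) -> bool}) : 'cV[algC]_(2 ^ n) :=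
  hadn n *m Uz z *m hadn n *m
  ((sqrtC 2)^-1 *: (spin_ket n (1 / 2) + spin_ket n (- (1 / 2)))).

(* Main.v *)
Require Import Defs.
From HB Require Import structures.
From mathcomp Require Import all_boot all_order all_algebra all_field zify ring.
Import Order.TTheory GRing.Theory Num.Theory.
Local Open Scope ring_scope.

Lemma bit0E y : bit 0 y = odd y.
Proof. by rewrite /bit expn0 divn1. Qed.

Lemma bitS i y : bit i.+1 y = bit i y./2.
Proof. by rewrite /bit expnS divnMA divn2. Qed.

Lemma bit_nat0 i : bit i 0 = false.
Proof. by rewrite /bit div0n. Qed.

Lemma bit_big m i k : (k < 2 ^ m)%N -> (m <= i)%N -> bit i k = false.
Proof.
move=> hk hi; rewrite /bit divn_small //.
apply: leq_trans hk _; by rewrite leq_exp2l.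
Qed.

Lemma half_lt m k : (k < 2 ^ m.+1)%N -> (k./2 < 2 ^ m)%N.
Proof.
rewrite expnS mul2n -{1}(odd_double_half k) => hk.
rewrite -ltn_double; apply: leq_ltn_trans (leq_addl (odd k) _) hk.
Qed.

Lemma bit_add m i k : (k < 2 ^ m)%N -> bit i (2 ^ m + k) = bit i k (+) (i == m).
Proof.
elim: m i k => [|m IH] i k hk.
  have -> : k = 0%N by move: hk; rewrite expn0; case: k.
  by case: i => [|i]; rewrite ?bit0E ?bitS ?bit_nat0.
case: i => [|i].
  by rewrite !bit0E oddD oddX; case: (odd k).
have hk2 : (k./2 < 2 ^ m)%N by exact: half_lt.
rewrite !bitS eqSS -IH //; congr bit.
rewrite -{1}(odd_double_half k) expnS addnCA mul2n -doubleD.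
by rewrite half_bit_double.
Qed.

Lemma bit_comp m i k : (k < 2 ^ m)%N -> bit i (2 ^ m - 1 - k) = (i < m)%N && ~~ bit i k.
Proof.
elim: m i k => [|m IH] i k hk.
  have -> : k = 0%N by move: hk; rewrite expn0; case: k.
  by rewrite expn0 subnn sub0n bit_nat0.
have hk2 : (k./2 < 2 ^ m)%N by exact: half_lt.
have hp : (0 < 2 ^ m)%N by rewrite expn_gt0.
case: i => [|i].
  rewrite !bit0E oddB; last by move: hk; rewrite expnS; lia.
  rewrite oddB ?expn_gt0 // oddX /=. by case: (odd k).
rewrite !bitS ltnS -IH //; congr bit.
have -> : (2 ^ m.+1 - 1 - k = (~~ odd k) + (2 ^ m - 1 - k./2).*2)%N.
  move: hk hk2 hp; rewrite expnS -{1 3}(odd_double_half k).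
  case: (odd k) => /=; rewrite -!muln2; lia.
by rewrite half_bit_double.
Qed.

Lemma bitdotC n x y : bitdot n x y = bitdot n y x.
Proof. by rewrite /bitdot; congr odd; apply: eq_bigr => i _; rewrite andbC. Qed.

Lemma sign_bitdot n x u :
  (-1 : algC) ^+ bitdot n x u = \prod_(i < n) (-1) ^+ (bit i x && bit i u).
Proof. by rewrite /bitdot signr_odd expr_sum. Qed.

Lemma sign3 n x u v w :
  (-1 : algC) ^+ bitdot n x u * (-1) ^+ bitdot n x v * (-1) ^+ bitdot n x w =
  \prod_(i < n) (-1) ^+ (bit i x && (bit i u (+) bit i v (+) bit i w)).
Proof.
rewrite !sign_bitdot -!big_split; apply: eq_bigr => i _ /=.
case: (bit i x); case: (bit i u); case: (bit i v); case: (bit i w); rewrite /= ?expr0 ?expr1 ?mulr1 ?mul1r ?mulrNN ?mulN1r ?opprK.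
all: by rewrite ?mul1r ?mulr1 ?mul1r.

Qed.

Definition flipn (x : nat) : nat := if odd x then x.-1 else x.+1.

Lemma flipn_ltn m x : (x < 2 ^ m.+1)%N -> (flipn x < 2 ^ m.+1)%N.
Proof.
rewrite /flipn => hx.
case hx2 : (odd x); first by apply: leq_ltn_trans hx; exact: leq_pred.
move: hx; rewrite expnS -{1 2}(odd_double_half x) hx2 /= -!muln2; lia.
Qed.

Lemma flipn_lt m (x : 'I_(2 ^ m.+1)) : (flipn x < 2 ^ m.+1)%N.
Proof. exact: flipn_ltn (ltn_ord x). Qed.

Lemma flipn_odd x : odd (flipn x) = ~~ odd x.
Proof.
rewrite /flipn; case hx: (odd x); last by rewrite /= hx.
by case: x hx => [|y] //= /negbTE.
Qed.

Lemma flipn_half x : (flipn x)./2 = x./2.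
Proof.
rewrite /flipn; case hx: (odd x); last by rewrite /= uphalf_half hx.
case: x hx => [|y] //= /negbTE hy.
by rewrite uphalf_half hy.

Qed.

Lemma flipnK x : flipn (flipn x) = x.
Proof.
have h := flipn_odd x; rewrite [in LHS]/flipn.
case hx: (odd x) h => /= h.
  by move: h; rewrite /flipn hx => ->; case: x hx.
by rewrite hx.
Qed.

Lemma sum_alt m : \sum_(x < 2 ^ m.+1) \prod_(i < m.+1) (-1 : algC) ^+ bit i x = 0.
Proof.
pose f (x : 'I_(2 ^ m.+1)) : 'I_(2 ^ m.+1) := Ordinal ((@flipn_lt m x)).
have finj : injective f.
  apply: (can_inj (g := f)) => x; apply: val_inj; exact: flipnK.
set S := \sum_(x < _) _.
have hS : S = - S.
  rewrite {1}/S (reindex_inj finj) /S -sumrN; apply: eq_bigr => x _.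
  rewrite !big_ord_recl !bit0E /= flipn_odd.
  under eq_bigr do rewrite bitS.
  under [in RHS]eq_bigr do rewrite bitS.
  rewrite flipn_half; case: (odd x); rewrite /= ?expr0 ?expr1 ?mulN1r ?mul1r ?opprK //.
have: S *+ 2 == 0 by rewrite mulr2n {1}hS addNr.
by rewrite mulrn_eq0 => /eqP.
Qed.

Lemma sum_delta N a (ha : (a < N)%N) (F : 'I_N -> algC) :
  \sum_(w < N) F w * ((w : nat) == a)%:R = F (Ordinal ha).
Proof.
rewrite (bigD1 (Ordinal ha)) //= eqxx mulr1 big1 ?addr0 // => w hw.
suff -> : ((w : nat) == a) = false by rewrite mulr0.
apply/negbTE; apply: contra hw => /eqP h; apply/eqP; exact: val_inj.
Qed.

Lemma two_neq0 : (2 : algC) != 0.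
Proof. by rewrite pnatr_eq0. Qed.

Lemma spin_eq m (t : algC) k i : t + spin m = k%:R -> (i%:R == t + spin m) = (i == k).
Proof. by move=> ->; rewrite eqr_nat. Qed.

Lemma spinN m : spin m.+1 = (2 ^ m)%:R - 1 / 2.
Proof.
rewrite /spin expnS natrM; have := two_neq0; move=> h; field.
by [].
Qed.

Lemma spin1 m : 1 / 2 + spin m.+1 = (2 ^ m)%:R.
Proof. rewrite spinN; by field. Qed.

Lemma spin2 m : - (1 / 2) + spin m.+1 = (2 ^ m - 1)%:R.
Proof. rewrite spinN natrB ?expn_gt0 //; by field. Qed.

Lemma spin3 m j : 1 / 2 + j%:R + spin m.+1 = (2 ^ m + j)%:R.
Proof. rewrite spinN natrD; by field. Qed.

Lemma spin4 m j : (j < 2 ^ m)%N -> - (1 / 2) - j%:R + spin m.+1 = (2 ^ m - 1 - j)%:R.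
Proof. move=> hj; rewrite spinN !natrB ?subn_gt0 ?expn_gt0 //; last by lia. by field. Qed.

Lemma HU_E n z (y x : 'I_(2 ^ n)) : (hadn n *m Uz z) y x = hadn n y x * (-1) ^+ z x.
Proof.
rewrite !mxE (bigD1 x) //= !mxE eqxx mul1r big1 ?addr0 // => k hk.
by rewrite !mxE (negbTE hk) mul0r mulr0.
Qed.

Lemma Psi3E m z (y : 'I_(2 ^ m.+1)) : Psi3 z y 0 =
  (sqrtC 2)^-1 * ((sqrtC (2 ^ m.+1)%:R)^-1) ^+ 2 *
  \sum_(x < 2 ^ m.+1) ((-1) ^+ bitdot m.+1 x y * (-1) ^+ z x *
     ((-1) ^+ bitdot m.+1 x (2 ^ m) + (-1) ^+ bitdot m.+1 x (2 ^ m - 1))).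
Proof.
have ha : (2 ^ m < 2 ^ m.+1)%N by rewrite ltn_exp2l.
have hb : (2 ^ m - 1 < 2 ^ m.+1)%N by move: ha; lia.
rewrite /Psi3 mxE.
under eq_bigr => w _ do rewrite !mxE (spin_eq _ _ _ _ (spin1 m)) (spin_eq _ _ _ _ (spin2 m)).
under eq_bigr => w _ do rewrite mulrDr mulrDr mulrCA [X in _ + X]mulrCA.
rewrite big_split /= -!mulr_sumr (sum_delta _ _ ha) (sum_delta _ _ hb).
rewrite -mulrDr -big_split /= -mulrA !mulr_sumr.
apply: eq_bigr => x _; rewrite !HU_E !mxE bitdotC /=.
ring.
Qed.

Lemma sign_le1 k : (-1 : algC) ^+ k <= 1.
Proof. rewrite -signr_odd; case: (odd k); rewrite ?expr0 ?expr1 //. by rewrite -subr_ge0 opprK addr_ge0 ?ler01. Qed.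

Lemma signs_le1 a b c : (-1 : algC) ^+ a * (-1) ^+ b * (-1) ^+ c <= 1.
Proof. by rewrite -!exprD sign_le1. Qed.

Lemma signN (b : bool) : (-1 : algC) ^+ (~~ b) = - (-1) ^+ b.
Proof. by case: b; rewrite /= ?expr0 ?expr1 ?opprK. Qed.

Lemma card_sum N (b : 'I_N -> bool) : \sum_x (b x)%:R = (#|[set x | b x]|)%:R :> algC.
Proof.
rewrite -sum1dep_card natr_sum [RHS]big_mkcond /=; apply: eq_bigr => x _.
by case: (b x).
Qed.

Lemma core m j z y :
  \sum_(x < 2 ^ m.+1) ((-1) ^+ bitdot m.+1 x y * (-1) ^+ bitdot m.+1 x j *
     ((-1) ^+ bitdot m.+1 x (2 ^ m) + (-1) ^+ bitdot m.+1 x (2 ^ m - 1)))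
    = (2 ^ m.+1)%:R :> algC ->
  (2 ^ m.+1)%:R - 4 * (hamming_dist z (hadamard_codeword m.+1 j))%:R <=
  \sum_(x < 2 ^ m.+1) ((-1 : algC) ^+ bitdot m.+1 x y * (-1) ^+ z x *
     ((-1) ^+ bitdot m.+1 x (2 ^ m) + (-1) ^+ bitdot m.+1 x (2 ^ m - 1))).
Proof.
move=> hP; rewrite -{1}hP /hamming_dist -card_sum mulr_sumr -sumrB.
apply: ler_sum => x _; rewrite ffunE.
set e1 := (-1) ^+ bitdot m.+1 x y; set e2 := (-1) ^+ bitdot m.+1 x j.
set sa := (-1) ^+ bitdot m.+1 x (2 ^ m); set sb := (-1) ^+ bitdot m.+1 x (2 ^ m - 1).
case hz : (z x == bitdot m.+1 x j).
  by rewrite (eqP hz) mulr0 subr0.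
have -> : z x = ~~ bitdot m.+1 x j by move/negbT: hz; case: (z x); case: bitdot.
rewrite signN -/e2 mulr1.
have h1 : e1 * e2 * sa <= 1 by apply: signs_le1.
have h2 : e1 * e2 * sb <= 1 by apply: signs_le1.
rewrite -subr_ge0.
have -> : e1 * - e2 * (sa + sb) - (e1 * e2 * (sa + sb) - 4) =
   (1 - e1 * e2 * sa) * 2 + (1 - e1 * e2 * sb) * 2 by ring.
by apply: addr_ge0; apply: mulr_ge0; rewrite ?subr_ge0 ?ler0n.
Qed.

Lemma psum m u j w (c : bool) :
  (forall i : 'I_m.+1, bit i u (+) bit i j (+) bit i w = c) ->
  \sum_(x < 2 ^ m.+1) ((-1 : algC) ^+ bitdot m.+1 x u * (-1) ^+ bitdot m.+1 x j *
     (-1) ^+ bitdot m.+1 x w) = if c then 0 else (2 ^ m.+1)%:R.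
Proof.
move=> hc; under eq_bigr => x _ do rewrite sign3.
case: c hc => hc.
  under eq_bigr => x _ do (under eq_bigr => i _ do rewrite hc andbT).
  exact: sum_alt.
under eq_bigr => x _ do (under eq_bigr => i _ do rewrite hc andbF expr0).
by rewrite /= big1_eq sumr_const card_ord.
Qed.

Lemma bits_pow m i : bit i (2 ^ m) = (i == m).
Proof. by rewrite -(addn0 (2 ^ m)%N) bit_add ?expn_gt0 // bit_nat0. Qed.

Lemma bits_pm1 m i : bit i (2 ^ m - 1) = (i < m)%N.
Proof. by rewrite -(subn0 (2 ^ m - 1)%N) bit_comp ?expn_gt0 // bit_nat0 andbT. Qed.

Lemma Psum1 m j : (j < 2 ^ m)%N ->
  \sum_(x < 2 ^ m.+1) ((-1 : algC) ^+ bitdot m.+1 x (2 ^ m + j) * (-1) ^+ bitdot m.+1 x j *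
     ((-1) ^+ bitdot m.+1 x (2 ^ m) + (-1) ^+ bitdot m.+1 x (2 ^ m - 1)))
    = (2 ^ m.+1)%:R.
Proof.
move=> hj; under eq_bigr => x _ do rewrite mulrDr.
rewrite big_split /= (psum _ _ _ _ false) ?(psum _ _ _ _ true) ?addr0 // => i.
  rewrite bit_add // bits_pm1; have := ltn_ord i; rewrite ltnS leq_eqVlt.
  case/orP => [/eqP -> | hi]; first by rewrite eqxx ltnn; case: bit.
  by rewrite hi (ltn_eqF hi); case: bit.
rewrite bit_add // bits_pow; by case: bit; case: (_ == _).
Qed.

Lemma Psum2 m j : (j < 2 ^ m)%N ->
  \sum_(x < 2 ^ m.+1) ((-1 : algC) ^+ bitdot m.+1 x (2 ^ m - 1 - j) * (-1) ^+ bitdot m.+1 x j *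
     ((-1) ^+ bitdot m.+1 x (2 ^ m) + (-1) ^+ bitdot m.+1 x (2 ^ m - 1)))
    = (2 ^ m.+1)%:R.
Proof.
move=> hj; under eq_bigr => x _ do rewrite mulrDr.
rewrite big_split /= (psum _ _ _ _ true) ?(psum _ _ _ _ false) ?add0r // => i.
  rewrite bit_comp // bits_pm1; case hi: (i < m)%N; first by case: bit.
  by rewrite /= (bit_big _ _ _ hj) // leqNgt hi.
rewrite bit_comp // bits_pow; have := ltn_ord i; rewrite ltnS leq_eqVlt.
case/orP => [/eqP -> | hi]; first by rewrite eqxx ltnn (bit_big _ _ _ hj).
by rewrite hi (ltn_eqF hi); case: bit.
Qed.

Lemma amp_bound m j z (y : 'I_(2 ^ m.+1)) :
  (hamming_dist z (hadamard_codeword m.+1 j))%:R < (2 ^ m.+1)%:R / 16 :> algC ->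
  \sum_(x < 2 ^ m.+1) ((-1 : algC) ^+ bitdot m.+1 x y * (-1) ^+ bitdot m.+1 x j *
     ((-1) ^+ bitdot m.+1 x (2 ^ m) + (-1) ^+ bitdot m.+1 x (2 ^ m - 1)))
    = (2 ^ m.+1)%:R ->
  9 / 32 <= `|Psi3 z y 0| ^+ 2.
Proof.
move=> hz hP; have hc := core _ _ z _ hP.
rewrite Psi3E.
set N : algC := (2 ^ m.+1)%:R.
set S := \sum_(x < _) _.
set d : algC := (hamming_dist _ _)%:R in hz hc.
have hN : 0 < N by rewrite ltr0n expn_gt0.
have hS : (3 * N / 4) <= S.
  apply: le_trans hc.
  have -> : 3 * N / 4 = N - 4 * (N / 16) by field.
  by rewrite lerB // ler_wpM2l // ltW.
have hS0 : 0 <= 3 * N / 4 by rewrite divr_ge0 // mulr_ge0 // ltW.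
have hk0 : 0 <= (sqrtC 2)^-1 * (sqrtC N)^-1 ^+ 2.
  by rewrite mulr_ge0 // ?exprn_ge0 // invr_ge0 sqrtC_ge0 ?ler0n // ltW.
rewrite normrM (ger0_norm hk0) (ger0_norm (le_trans hS0 hS)) exprMn.
have -> : ((sqrtC 2)^-1 * (sqrtC N)^-1 ^+ 2) ^+ 2 = (2 * N ^+ 2)^-1.
  have h2 : (sqrtC 2)^-1 ^+ 2 = 2^-1 :> algC by rewrite exprVn sqrtCK.
  have hN2 : (sqrtC N)^-1 ^+ 2 = N^-1 by rewrite exprVn sqrtCK.
  by rewrite hN2 exprMn h2 invfM exprVn.
apply: le_trans (ler_wpM2l _ (ler_pM hS0 hS0 hS hS)).
  rewrite le_eqVlt; apply/orP; left; apply/eqP. field. exact: lt0r_neq0.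
by rewrite invr_ge0 mulr_ge0 // ?ler0n // exprn_ge0 // ltW.
Qed.

Lemma braketE N (t : algC) a (ha : (a < N)%N) (v : 'cV[algC]_N) :
  (forall i : 'I_N, (i%:R == t) = (i == a :> nat)) ->
  braket (\col_(i < N) ((i%:R == t)%:R)) v = v (Ordinal ha) 0.
Proof.
move=> h; rewrite /braket.
under eq_bigr => i _ do rewrite mxE h conjC_nat mulrC.
exact: sum_delta.
Qed.

Theorem lemma3 (n : nat) (hn : (1 <= n)%N) (j : nat) (hj : (j < 2 ^ n %/ 2)%N)
  (z : {ffun 'I_(2 ^ n) -> bool})
  (hz : (hamming_dist z (hadamard_codeword n j))%:R < (2 ^ n)%:R / 16 :> algC) :
  9 / 16 <=
    `|braket (spin_ket n (1 / 2 + j%:R)) (Psi3 z)| ^+ 2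
  + `|braket (spin_ket n (- (1 / 2) - j%:R)) (Psi3 z)| ^+ 2.
Proof.
case: n hn hj z hz => // m _ hj z hz.
have {hj} hj : (j < 2 ^ m)%N by move: hj; rewrite expnS mulKn.
have h1 : (2 ^ m + j < 2 ^ m.+1)%N by rewrite expnS; lia.
have h2 : (2 ^ m - 1 - j < 2 ^ m.+1)%N by rewrite expnS; lia.
rewrite /spin_ket (braketE _ _ _ h1); last by move=> i; apply: spin_eq; exact: spin3.
rewrite (braketE _ _ _ h2); last by move=> i; apply: spin_eq; exact: spin4.
have -> : 9 / 16 = 9 / 32 + 9 / 32 :> algC by field.
apply: lerD.
  apply: (amp_bound m j z _ hz); exact: (Psum1 m j hj).
apply: (amp_bound m j z _ hz); exact: (Psum2 m j hj).
Qed.
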